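(* Let $A_1,A_2\subseteq A$ be nonempty and disjoint, $q\in Atom$, $\eta\in\{\mu,\nu\}$ and $\varphi\in\mathcal L^\mu_{CC}$ with $q$ occurring only positively in $\varphi$. Then $\models\exists_{(A_1,A_2)}\eta q.\varphi\to\eta q.\exists_{(A_1,A_2)}\varphi$.
   Context: Fix a finite set $A$ of actions and a countably infinite set $Atom$ of propositional letters. A model is $M=\langle S^M,R^M,V^M\rangle$ with $S^M\neq\emptyset$ a set of states, $R^M_b\subseteq S^M\times S^M$ for each $b\in A$, and $V^M:Atom\to 2^{S^M}$. A pointed model is $(M,s)$ with $s\in S^M$. Refinements: given $P\subseteq Atom$ and disjoint $A_1,A_2\subseteq A$, a relation $\mathcal Z\subseteq S^M\times S^{M'}$ is a $P$-restricted $(A_1,A_2)$-refinement between $M$ and $M'$ if for every pair $u\mathcal Z u'$: (atoms) $u\in V^M(r)$ iff $u'\in V^{M'}(r)$ for all $r\in Atom\setminus P$; (forth) for every $a\in A\setminus A_2$ and every $v$ with $uR^M_a v$ there is $v'$ with $u'R^{M'}_a v'$ and $v\mathcal Z v'$; (back) for every $a\in A\setminus A_1$ and every $v'$ with $u'R^{M'}_a v'$ there is $v$ with $uR^M_a v$ and $v\mathcal Z v'$. Write $M,u\succeq^P_{(A_1,A_2)}M',u'$ if such a $\mathcal Z$ exists with $u\mathcal Z u'$; the superscript is omitted when $P=\emptyset$. Language $\mathcal L^\mu_{CC}$: $\varphi::= r\mid\neg\varphi\mid\varphi\wedge\varphi\mid\Box_b\varphi\mid\exists_{(A_1,A_2)}\varphi\mid\mu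 q.\varphi$, where $r,q\in Atom$, $b\in A$, $A_1,A_2\subseteq A$ are nonempty and disjoint, and in $\mu q.\varphi$ the letter $q$ occurs only positively (under an even number of negations) in $\varphi$. Abbreviations: $\nu q.\varphi=\neg\mu q.\neg\varphi[\neg q/q]$; $\eta$ ranges over $\{\mu,\nu\}$. Semantics: $M,u\models r$ iff $u\in V^M(r)$; Boolean clauses as usual; $M,u\models\Box_b\varphi$ iff $M,v\models\varphi$ for all $v$ with $uR^M_bv$; $M,u\models\exists_{(A_1,A_2)}\varphi$ iff there is a pointed model $(N,v)$ with $M,u\succeq_{(A_1,A_2)}N,v$ and $N,v\models\varphi$; $M,u\models\mu q.\varphi$ iff $u\in\bigcap\{T\subseteq S^M:\|\varphi\|^{M[q\mapsto T]}\subseteq T\}$, where $\|\varphi\|^M=\{s:M,s\models\varphi\}$ and $M[q\mapsto T]$ is $M$ with $V(q)$ replaced by $T$ (so $\nu q.\varphi$ denotes the greatest fixed point). $\models\psi$ means $\psi$ holds at every pointed model. *)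

(* Defs.v *)
From mathcomp Require Import all_boot.
Unset Printing Implicit Defensive.

Definition atom := nat.

Section Logic.
Variable A : finType.

Inductive form : Type :=
| FAtom : atom -> form
| FNeg : form -> form
| FAnd : form -> form -> form
| FBox : A -> form -> form
| FEx : {set A} -> {set A} -> form -> form
| FMu : atom -> form -> form.

Fixpoint pos (q : atom) (f : form) : bool :=
  match f with
  | FAtom _ => true
  | FNeg g => neg q g
  | FAnd g h => pos q g && pos q h
  | FBox _ g => pos q g
  | FEx _ _ g => pos q g
  | FMu p g => (p == q) || pos q g
  end
with neg (q : atom) (f : form) : bool :=
  match f with
  | FAtom r => r != q
  | FNeg g => pos q g
  | FAnd g h => neg q g && neg q h
  | FBox _ g => neg q g
  | FEx _ _ g => neg q g
  | FMu p g => (p == q) || neg q g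
  end.

Fixpoint wf (f : form) : bool :=
  match f with
  | FAtom _ => true
  | FNeg g => wf g
  | FAnd g h => wf g && wf h
  | FBox _ g => wf g
  | FEx A1 A2 g => [&& A1 != set0, A2 != set0, [disjoint A1 & A2] & wf g]
  | FMu q g => pos q g && wf g
  end.

Fixpoint subst_neg (q : atom) (f : form) : form :=
  match f with
  | FAtom r => if r == q then FNeg (FAtom r) else FAtom r
  | FNeg g => FNeg (subst_neg q g)
  | FAnd g h => FAnd (subst_neg q g) (subst_neg q h)
  | FBox b g => FBox b (subst_neg q g)
  | FEx A1 A2 g => FEx A1 A2 (subst_neg q g)
  | FMu p g => if p == q then FMu p g else FMu p (subst_neg q g)
  end.

Definition FNu (q : atom) (f : form) : form := FNeg (FMu q (FNeg (subst_neg q f))).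
Definition FImp (f g : form) : form := FNeg (FAnd f (FNeg g)).

Inductive fixkind := KMu | KNu.
Definition FFix (k : fixkind) (q : atom) (f : form) : form :=
  match k with KMu => FMu q f | KNu => FNu q f end.

Record model : Type := Model {
  St : Type;
  Rel : A -> St -> St -> Prop;
  Val : atom -> St -> Prop }.

Definition upd (M : model) (q : atom) (T : St M -> Prop) : model :=
  {| St := St M; Rel := Rel M; Val := fun r => if r == q then T else Val M r |}.

(* (A1,A2)-refinement (P = empty): M,u >= N,v *)
Definition refines (A1 A2 : {set A}) (M : model) (u : St M) (N : model) (v : St N) : Prop :=
  exists Z : St M -> St N -> Prop,
    Z u v /\
    forall x x', Z x x' ->
      (forall r, Val M r x <-> Val N r x') /\
      (forall a, a \notin A2 -> forall y, Rel M a x y -> exists y', Rel N a x' y' /\ Z y y') /\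
      (forall a, a \notin A1 -> forall y', Rel N a x' y' -> exists y, Rel M a x y /\ Z y y').

Fixpoint sat (f : form) : forall M : model, St M -> Prop :=
  match f with
  | FAtom r => fun M u => Val M r u
  | FNeg g => fun M u => ~ sat g M u
  | FAnd g h => fun M u => sat g M u /\ sat h M u
  | FBox b g => fun M u => forall v, Rel M b u v -> sat g M v
  | FEx A1 A2 g => fun M u =>
      exists (N : model) (v : St N), refines A1 A2 M u N v /\ sat g N v
  | FMu q g => fun M u =>
      forall T : St M -> Prop,
        (forall s, sat g (upd M q T) s -> T s) -> T u
  end.

Definition valid (f : form) : Prop := forall (M : model) (u : St M), sat f M u.

End Logic.

Arguments FAtom {A} _.
Arguments FNeg {A} _.
Arguments FAnd {A} _ _.
Arguments FBox {A} _ _.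
Arguments FEx {A} _ _ _.
Arguments FMu {A} _ _.
Arguments pos {A} _ _.
Arguments neg {A} _ _.
Arguments wf {A} _.
Arguments subst_neg {A} _ _.
Arguments FNu {A} _ _.
Arguments FImp {A} _ _.
Arguments FFix {A} _ _ _.
Arguments St {A} _.
Arguments Rel {A} _ _ _ _.
Arguments Val {A} _ _ _.
Arguments upd {A} _ _ _.
Arguments refines {A} _ _ _ _ _ _.
Arguments sat {A} _ _ _.
Arguments valid {A} _.

(* Main.v *)
Require Import Defs.
From mathcomp Require Import all_boot.
From Stdlib Require Import Classical.

Definition MB {A : finType} {M M' : model A} (Sup Sdown : atom -> Prop)
  (Z : St M -> St M' -> Prop) :=
 forall x x', Z x x' ->
  (forall r, ~ Sdown r -> Val M r x -> Val M' r x') /\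
  (forall r, ~ Sup r -> Val M' r x' -> Val M r x) /\
  (forall a y, Rel M a x y -> exists y', Rel M' a x' y' /\ Z y y') /\
  (forall a y', Rel M' a x' y' -> exists y, Rel M a x y /\ Z y y').

Definition CRel {A : finType} {X Y N : model A} (Z : St X -> St Y -> Prop)
  (W : St X -> St N -> Prop) (B1 : {set A}) (a : A)
  (p p' : (St Y * St N) + St N) : Prop :=
  match p, p' with
  | inl (y, n), inl (y', n') => Rel Y a y y' /\ Rel N a n n' /\ exists x', Z x' y' /\ W x' n'
  | inl (_, n), inr n' => a \in B1 /\ Rel N a n n'
  | inr n, inr n' => Rel N a n n'
  | inr _, inl _ => False
  end.

Definition CVal {A : finType} (Y N : model A) (r : atom) (p : (St Y * St N) + St N) : Prop :=
  match p with inl (y, _) => Val Y r y | inr n => Val N r n end.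

Definition CM {A : finType} {X Y N : model A} (Z : St X -> St Y -> Prop)
  (W : St X -> St N -> Prop) (B1 : {set A}) : model A :=
  {| St := (St Y * St N) + St N; Rel := CRel Z W B1; Val := CVal Y N |}.

Definition Zbis {A : finType} {X Y : model A} (Z : St X -> St Y -> Prop) :=
  forall x y, Z x y ->
  (forall a x1, Rel X a x x1 -> exists y1, Rel Y a y y1 /\ Z x1 y1) /\
  (forall a y1, Rel Y a y y1 -> exists x1, Rel X a x x1 /\ Z x1 y1).

Definition Wref {A : finType} (B1 B2 : {set A}) {X N : model A} (W : St X -> St N -> Prop) :=
  forall x n, W x n ->
  (forall a, a \notin B2 -> forall x1, Rel X a x x1 -> exists n1, Rel N a n n1 /\ W x1 n1) /\
  (forall a, a \notin B1 -> forall n1, Rel N a n n1 -> exists x1, Rel X a x x1 /\ W x1 n1).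

Lemma c_ref {A : finType} {B1 B2 : {set A}} {X Y N : model A} {Z : St X -> St Y -> Prop}
  {W : St X -> St N -> Prop} :
  Zbis Z -> Wref B1 B2 W -> forall x y n, Z x y -> W x n ->
  refines B1 B2 Y y (CM Z W B1) (inl (y, n)).
Proof.
move=> HZ HW x y n Zxy Wxn.
exists (fun y (p : St (CM Z W B1)) => match p with
  | inl (y', n) => y' = y /\ exists x, Z x y /\ W x n | inr _ => False end).
split; first by split => //; exists x.
move=> y0 [[y' n0]|n0] //= [-> [x0 [Z0 W0]]].
split; first by move=> r; split.
split.
- move=> a Ha y1 Hy1.
  have [_ Hb] := HZ _ _ Z0.
  have [x1 [Hx1 Z1]] := Hb _ _ Hy1.
  have [Hf _] := HW _ _ W0.
  have [n1 [Hn1 W1]] := Hf _ Ha _ Hx1.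
  exists (inl (y1, n1)); split => /=.
    by split => //; split => //; exists x1.
  by split => //; exists x1.
- move=> a Ha [[y1 n1]|n1] /=.
    move=> [H1 [H2 [x1 [Z1 W1]]]]; exists y1; split => //; split => //; exists x1; by [].
  by move=> [H _]; rewrite H in Ha.
Qed.

Definition CS {A : finType} {X Y N : model A} (Z : St X -> St Y -> Prop)
  (W : St X -> St N -> Prop) (B1 : {set A}) (n : St N) (p : St (CM Z W B1)) : Prop :=
  match p with inl (y, n') => n' = n /\ exists x, Z x y /\ W x n | inr n' => n' = n end.

Lemma c_bis {A : finType} {B1 B2 : {set A}} {X Y N : model A} {Z : St X -> St Y -> Prop}
  {W : St X -> St N -> Prop} :
  Zbis Z -> Wref B1 B2 W -> forall n p, CS Z W B1 n p ->
  (forall a n1, Rel N a n n1 -> exists p1, Rel (CM Z W B1) a p p1 /\ CS Z W B1 n1 p1) /\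
  (forall a p1, Rel (CM Z W B1) a p p1 -> exists n1, Rel N a n n1 /\ CS Z W B1 n1 p1).
Proof.
move=> HZ HW n [[y n']|n'] /=.
- move=> [-> [x [Zxy Wxn]]]; split.
  + move=> a n1 Hn1.
    case: (boolP (a \in B1)) => Ha.
      by exists (inr n1).
    have [_ Hb] := HW _ _ Wxn.
    have [x1 [Hx1 W1]] := Hb _ Ha _ Hn1.
    have [Hf _] := HZ _ _ Zxy.
    have [y1 [Hy1 Z1]] := Hf _ _ Hx1.
    exists (inl (y1, n1)) => /=; split.
      by split => //; split => //; exists x1.
    by split => //; exists x1.
  + move=> a [[y1 n1]|n1] /=.
      by move=> [H1 [H2 [x1 [Z1 W1]]]]; exists n1; split => //; split => //; exists x1.
    by move=> [_ H]; exists n1.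
- move=> ->; split.
  + by move=> a n1 H; exists (inr n1).
  + by move=> a [[y1 n1]|n1] //= H; exists n1.
Qed.

Lemma refines_Wref {A : finType} {B1 B2 : {set A}} {M N : model A} {u v} :
  refines B1 B2 M u N v -> exists W : St M -> St N -> Prop, W u v /\ Wref B1 B2 W /\
    forall x n, W x n -> forall r, Val M r x <-> Val N r n.
Proof.
move=> [W [Wuv HW]]; exists W; split => //; split.
  by move=> x n /HW [_ [H1 H2]].
by move=> x n /HW [H _].
Qed.

Lemma mb_sat {A : finType} {phi : form A} : wf phi ->
  forall (M M' : model A) Sup Sdown (Z : St M -> St M' -> Prop), MB Sup Sdown Z ->
  forall x x', Z x x' ->
  ((forall r, Sup r -> pos r phi) -> (forall r, Sdown r -> neg r phi) -> sat phi M x -> sat phi M' x') /\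
  ((forall r, Sup r -> neg r phi) -> (forall r, Sdown r -> pos r phi) -> sat phi M' x' -> sat phi M x).
Proof.
elim: phi => [r|g IH|g IHg h IHh|b g IH|B1 B2 g IH|p g IH] /= Hwf M M' Sup Sdown Z HMB x x' Zx.
- have [H1 [H2 _]] := HMB _ _ Zx.
  split => Hs Hd.
  + apply: H1 => /Hd; by rewrite eqxx.
  + apply: H2 => /Hs; by rewrite eqxx.
- have [I1 I2] := IH Hwf _ _ _ _ _ HMB _ _ Zx.
  split => Hs Hd Hn Hn'.
  + by apply: Hn; apply: I2 => // r /Hd.
  + by apply: Hn; apply: I1 => // r /Hs.
- move/andP: Hwf => [wg wh].
  have [I1 I2] := IHg wg _ _ _ _ _ HMB _ _ Zx.
  have [J1 J2] := IHh wh _ _ _ _ _ HMB _ _ Zx.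
  split => Hs Hd [Hg Hh].
  + split; [apply: I1|apply: J1] => // r; [move/Hs|move/Hd|move/Hs|move/Hd]; by case/andP.
  + split; [apply: I2|apply: J2] => // r; [move/Hs|move/Hd|move/Hs|move/Hd]; by case/andP.
- have [_ [_ [Hf Hb]]] := HMB _ _ Zx.
  split => Hs Hd H.
  + move=> v' Hv'. have [v [Hv Zv]] := Hb _ _ Hv'.
    have [I1 _] := IH Hwf _ _ _ _ _ HMB _ _ Zv. by apply: I1 => //; apply: H.
  + move=> v Hv. have [v' [Hv' Zv]] := Hf _ _ Hv.
    have [_ I2] := IH Hwf _ _ _ _ _ HMB _ _ Zv. by apply: I2 => //; apply: H.
- move/and4P: Hwf => [_ _ _ wg].
  split => Hs Hd [N [n [Hr Hg]]].
  + have [W [Wxn [HW HWv]]] := refines_Wref Hr.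
    have HZ : Zbis Z.
      move=> y y' /HMB [_ [_ [Hf Hb]]]; split; [exact: Hf|exact: Hb].
    exists (CM Z W B1), (inl (x', n)); split.
      exact: (c_ref HZ HW _ _ _ Zx Wxn).
    have HS : MB Sup Sdown (CS Z W B1).
      move=> n0 p Hp; have [Hf Hb] := c_bis HZ HW _ _ Hp.
      split; last split; last by split.
      * case: p Hp {Hf Hb} => [[y n']|n'] /=; last by move=> -> ? _ ?.
        move=> [_ [x0 [Z0 W0]]] r Hr0 Hv.
        have [H1 _] := HMB _ _ Z0. by apply: H1 => //; apply/(HWv _ _ W0).
      * case: p Hp {Hf Hb} => [[y n']|n'] /=; last by move=> -> ? _ ?.
        move=> [_ [x0 [Z0 W0]]] r Hr0 Hv.
        have [_ [H2 _]] := HMB _ _ Z0. by apply/(HWv _ _ W0); apply: H2.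
    have [I1 _] := IH wg _ _ _ _ _ HS n (inl (x', n)) (conj erefl (ex_intro _ x (conj Zx Wxn))).
    by apply: I1.
  + have [W [Wxn [HW HWv]]] := refines_Wref Hr.
    pose Zc := fun (y' : St M') (y : St M) => Z y y'.
    have HZ : Zbis Zc.
      move=> y' y /HMB [_ [_ [Hf Hb]]]; split; [exact: Hb|exact: Hf].
    exists (CM Zc W B1), (inl (x, n)); split.
      exact: (c_ref HZ HW _ _ _ Zx Wxn).
    pose Sc := fun (p : St (CM Zc W B1)) (n0 : St N) => CS Zc W B1 n0 p.
    have HS : MB Sup Sdown Sc.
      move=> p n0 Hp; have [Hf Hb] := c_bis HZ HW _ _ Hp.
      split; last split; last split.
      * case: p Hp {Hf Hb} => [[y n']|n'] /=; last by move=> -> ? _ ?.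
        move=> [_ [x0 [Z0 W0]]] r Hr0 Hv.
        have [H1 _] := HMB _ _ Z0. by apply/(HWv _ _ W0); apply: H1.
      * case: p Hp {Hf Hb} => [[y n']|n'] /=; last by move=> -> ? _ ?.
        move=> [_ [x0 [Z0 W0]]] r Hr0 Hv.
        have [_ [H2 _]] := HMB _ _ Z0. by apply: H2 => //; apply/(HWv _ _ W0).
      * by move=> a p1 /Hb.
      * by move=> a n1 /Hf.
    have [_ I2] := IH wg _ _ _ _ _ HS (inl (x, n)) n (conj erefl (ex_intro _ x' (conj Zx Wxn))).
    by apply: I2.
- move/andP: Hwf => [pg wg].
  split => Hs Hd H.
  + move=> T' HT'.
    pose T := fun y => forall y', Z y y' -> T' y'.
    have HMB' : MB (fun r => r = p \/ Sup r) (fun r => r <> p /\ Sdown r)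
        (M := upd M p T) (M' := upd M' p T') Z.
      move=> y y' Zy; have [H1 [H2 H3]] := HMB _ _ Zy.
      split; last split => //.
      * move=> r Hr /=; case: eqP => [_|Hrp]; first by move=> Ht; apply: Ht.
        by apply: H1 => Hd'; apply: Hr; split.
      * move=> r Hr /=; case: eqP => [Hrp|Hrp]; first by exfalso; apply: Hr; left.
        by apply: H2 => Hs'; apply: Hr; right.
    apply: (H T) => [s Hgs y' Zy|//].
    apply: HT'.
    have [I1 _] := IH wg _ _ _ _ _ HMB' _ _ Zy.
    apply: I1 => //.
    * move=> r [E|Hr]; first by subst. case: (eqVneq p r) => [E|Hpr]; first by subst.
      by have := Hs _ Hr; rewrite (negbTE Hpr).
    * move=> r [Hrp Hr]. have := Hd _ Hr.
      by case: eqP => // E; exfalso; apply: Hrp.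
  + move=> T HT.
    pose T' := fun y' => forall y, Z y y' -> T y.
    have HMB' : MB (fun r => r <> p /\ Sup r) (fun r => r = p \/ Sdown r)
        (M := upd M p T) (M' := upd M' p T') Z.
      move=> y y' Zy; have [H1 [H2 H3]] := HMB _ _ Zy.
      split; last split => //.
      * move=> r Hr /=; case: eqP => [Hrp|Hrp]; first by exfalso; apply: Hr; left.
        by apply: H1 => Hd'; apply: Hr; right.
      * move=> r Hr /=; case: eqP => [_|Hrp]; first by move=> Ht; apply: Ht.
        by apply: H2 => Hs'; apply: Hr; split.
    apply: (H T') => [s' Hgs y Zy|//].
    apply: HT.
    have [_ I2] := IH wg _ _ _ _ _ HMB' _ _ Zy.
    apply: I2 => //.
    * move=> r [Hrp Hr]. have := Hs _ Hr.
      by case: eqP => // E; exfalso; apply: Hrp.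
    * move=> r [E|Hr]; first by subst. case: (eqVneq p r) => [E|Hpr]; first by subst.
      by have := Hd _ Hr; rewrite (negbTE Hpr).
Qed.

Lemma eq_sat {A : finType} {phi : form A} : wf phi ->
  forall (M : model A) (V : atom -> St M -> Prop), (forall r s, Val M r s <-> V r s) ->
  forall s, sat phi M s <-> sat phi {| St := St M; Rel := Rel M; Val := V |} s.
Proof.
move=> wphi M V HV s.
have HMB : MB (fun _ => False) (fun _ => False)
   (M := M) (M' := {| St := St M; Rel := Rel M; Val := V |}) (fun x y => x = y).
  move=> x x' -> /=; split; last split; last split.
  - by move=> r _ /HV.
  - by move=> r _ /HV.
  - by move=> a y H; exists y.
  - by move=> a y H; exists y.
have [H1 H2] := mb_sat wphi _ _ _ _ _ HMB _ _ (erefl s).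
by split; [apply: H1|apply: H2].
Qed.

Lemma Vupd_q {A : finType} (M : model A) q T s : Val (upd M q T) q s = T s.
Proof. by rewrite /= eqxx. Qed.

Lemma Vupd_r {A : finType} (M : model A) q T r s : r <> q -> Val (upd M q T) r s = Val M r s.
Proof. by move=> /eqP /negbTE H /=; rewrite H. Qed.

Lemma subst_sat {A : finType} (q : atom) (phi : form A) : wf phi ->
  forall (M : model A) s, sat (subst_neg q phi) M s <-> sat phi (upd M q (fun s => ~ Val M q s)) s.
Proof.
elim: phi => [r|g IH|g IHg h IHh|b g IH|B1 B2 g IH|p g IH] /= Hwf M s.
- by case: eqP => [->|_] /=; rewrite ?eqxx.
- by rewrite IH.
- by move/andP: Hwf => [wg wh]; rewrite IHg // IHh.
- by split => H v Hv; apply/IH => //; apply: H.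
- move/and4P: Hwf => [_ _ _ wg]; split.
  + move=> [N [v [[R [Ruv HR]] Hg]]].
    exists (upd N q (fun s => ~ Val N q s)), v; split; last by apply/IH.
    exists R; split => // x x' /HR [Ha [Hf Hb]]; split => // r /=.
    case: eqP => _; last exact: Ha.
    by have := Ha q; tauto.
  + move=> [N [v [[R [Ruv HR]] Hg]]].
    exists (upd N q (fun s => ~ Val N q s)), v; split.
      exists R; split => // x x' /HR [Ha [Hf Hb]]; split => // r.
      case: (eqVneq r q) => [->|Hrq].
        have := Ha q; rewrite /= eqxx => H; split.
          by move=> H1 H2; move/H: H2; apply.
        by move=> H1; apply: NNPP => H2; apply: H1; apply/H.
      by have := Ha r; rewrite /= (negbTE Hrq).
    apply/IH => //.
    apply: (proj1 (eq_sat wg N _ _ v) Hg) => r x /=.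
    case: (eqVneq r q) => [->|Hrq]; rewrite ?eqxx ?(negbTE Hrq) //.
    by split => [H H1|H]; [apply: H1|apply: NNPP].
- move/andP: Hwf => [pg wg].
  case: eqP => [E|Hpq] /=; first subst p.
  + have HMB : MB (fun r => r = q) (fun r => r = q)
       (M := M) (M' := upd M q (fun s => ~ Val M q s)) (fun x y => x = y).
      move=> x x' ->; split; last split; last split.
      - by move=> r Hr; rewrite Vupd_r.
      - by move=> r Hr; rewrite Vupd_r.
      - by move=> a y H; exists y.
      - by move=> a y H; exists y.
    have wq : wf (FMu q g) by rewrite /= pg wg.
    have [H1 H2] := mb_sat wq _ _ _ _ _ HMB _ _ (erefl s).
    split => H.
    * by apply: H1 => // r -> /=; rewrite eqxx.
    * by apply: H2 => // r -> /=; rewrite eqxx.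
  + have E : forall T s, sat (subst_neg q g) (upd M p T) s <->
        sat g (upd (upd M q (fun s => ~ Val M q s)) p T) s.
      move=> T s0; rewrite IH //.
      apply: (eq_sat wg) => r x /=.
      have Hqp : (q == p) = false by apply/eqP => E'; apply: Hpq; rewrite E'.
      case: (eqVneq r q) => [->|Hrq]; rewrite ?eqxx ?Hqp ?(negbTE Hrq) //; by case: (eqVneq r p) => [->|Hrp]; rewrite ?eqxx ?(negbTE Hrp).
    split => H T HT; apply: H => s0 Hs0; apply: HT; by apply/E.
Qed.

Lemma zbis_upd {A : finType} (M : model A) q T :
  Zbis (X := M) (Y := upd M q T) (fun x y => x = y).
Proof. by move=> x y ->; split => a x1 H; exists x1. Qed.

Theorem mainTheorem7 (A : finType) (A1 A2 : {set A}) (q : atom) (eta : fixkind)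
  (phi : form A) :
  A1 != set0 -> A2 != set0 -> [disjoint A1 & A2] ->
  wf phi -> pos q phi ->
  valid (FImp (FEx A1 A2 (FFix eta q phi)) (FFix eta q (FEx A1 A2 phi))).
Proof.
move=> _ _ _ wphi pphi M u /= [[N [v [Hr Hfix]]] Hnot]; apply: Hnot.
have [W [Wuv [HW HWv]]] := refines_Wref Hr.
case: eta Hfix; rewrite /FFix /FNu /= => Hfix.
- move=> T HT.
  pose U := fun n => forall x, W x n -> T x.
  have HU : U v.
    apply: Hfix => n Hn x Wxn; apply: HT.
    have HW' : Wref A1 A2 (X := M) (N := upd N q U) W := HW.
    have HZ := zbis_upd M q T.
    exists (CM (X := M) (Y := upd M q T) (N := upd N q U) (fun x y => x = y) W A1), (inl (x, n)).
    split; first exact: c_ref HZ HW' _ _ _ (erefl x) Wxn.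
    have HS : MB (fun r => r = q) (fun _ => False)
       (CS (X := M) (Y := upd M q T) (N := upd N q U) (fun x y => x = y) W A1).
      move=> n0 p Hp; have [Hf Hb] := c_bis HZ HW' _ _ Hp.
      split; last split; last by split.
      * case: p Hp {Hf Hb} => [[y n']|n'] /=; last by move=> -> ? _ ?.
        move=> [_ [x0 [E0 W0]]] r _; rewrite -E0.
        case: (eqVneq r q) => [_|Hrq].
          by move=> H0; apply: H0.
        by move/(HWv _ _ W0).
      * case: p Hp {Hf Hb} => [[y n']|n'] /=; last by move=> -> ? _ ?.
        move=> [_ [x0 [E0 W0]]] r Hrq; rewrite -E0.
        have Hrq' : r != q by apply/eqP.
        rewrite (negbTE Hrq').
        by move/(HWv _ _ W0).
    have [I1 _] := mb_sat wphi _ _ _ _ _ HS n (inl (x, n))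
      (conj erefl (ex_intro _ x (conj erefl Wxn))).
    by apply: I1 => // r ->.
  exact: HU _ Wuv.
- have [T0 [HT0 nT0v]] : exists T, (forall s, ~ sat (subst_neg q phi) (upd N q T) s -> T s)
      /\ ~ T v.
    apply: NNPP => Hc; apply: Hfix => T HT; apply: NNPP => nT; apply: Hc; exists T.
    by split.
  move=> H.
  pose TM := fun x => ~ exists n, W x n /\ ~ T0 n.
  have HTM : TM u; last by apply: HTM; exists v.
  apply: H => s Hs [n [Wsn nT0n]]; apply: Hs.
  have HW' : Wref A1 A2 (X := M) (N := upd N q T0) W := HW.
  have HZ := zbis_upd M q TM.
  set P := CM (X := M) (Y := upd M q TM) (N := upd N q T0) (fun x y => x = y) W A1.
  exists P, (inl (s, n)).
  split; first exact: c_ref HZ HW' _ _ _ (erefl s) Wsn.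
  apply/(subst_sat q _ wphi).
  have Hn : sat phi (upd (upd N q T0) q (fun s => ~ Val (upd N q T0) q s)) n.
    apply/(subst_sat q _ wphi); apply: NNPP => Hc; apply: nT0n; exact: HT0.
  have HS : MB (fun r => r = q) (fun _ => False)
     (M := upd (upd N q T0) q (fun s => ~ Val (upd N q T0) q s))
     (M' := upd P q (fun s => ~ Val P q s))
     (CS (X := M) (Y := upd M q TM) (N := upd N q T0) (fun x y => x = y) W A1).
    move=> n0 p Hp; have [Hf Hb] := c_bis HZ HW' _ _ Hp.
    split; last split; last by split.
    * case: p Hp {Hf Hb} => [[y n']|n'] /=.
        move=> [_ [x0 [E0 W0]]] r _; rewrite -E0.
        case: (eqVneq r q) => [_|Hrq].
          by rewrite /= !eqxx => H0 H1; apply: H1; exists n0.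
        by rewrite /= (negbTE Hrq); move/(HWv _ _ W0).
      by move=> -> r _; rewrite /= /CVal /=; case: (r == q) => /= H0; exact: H0.
    * case: p Hp {Hf Hb} => [[y n']|n'] /=.
        move=> [_ [x0 [E0 W0]]] r Hrq; rewrite -E0.
        have Hrq' : r != q by apply/eqP.
        rewrite /= /CVal /= (negbTE Hrq').
        by move/(HWv _ _ W0).
      by move=> -> r _; rewrite /= /CVal /=; case: (r == q) => /= H0; exact: H0.
  have [I1 _] := mb_sat wphi _ _ _ _ _ HS n (inl (s, n))
    (conj erefl (ex_intro _ s (conj erefl Wsn))).
  by apply: I1 => // r ->.
Qed.
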